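(* Let $G_r=(V_r,E_r)$ be an arbitrary directed graph and $(i,j)\in E_r$ an existing edge. Adding to $G_r$ any number of new edges parallel to it, each oriented either as $(i,j)$ or as $(j,i)$, increases the extraction width $\mathrm{ew}(G_r)$ by at most the maximum degree of $G_r$. The same holds if instead of edges, paths between $i$ and $j$ (through new nodes) are added.
   Context: An extraction order of a directed (multi)graph $G=(V,E)$ is a rooted directed acyclic graph $G^{\mathcal X}=(V,E^{\mathcal X},s)$ in which every node is reachable from $s$ and $E^{\mathcal X}$ is obtained from $E$ by reversing some (possibly no) edges. A confluence from $a$ to $b$ is a pair of directed paths in $E^{\mathcal X}$ from $a$ to $b$ sharing no node other than $a,b$. For $e\in E^{\mathcal X}$, its label set $\mathcal L_e$ is the set of nodes $b$ such that $e$ lies on a confluence with target $b$. Each node's outgoing edges are partitioned into bags: classes of the equivalence relation generated by $e\sim e'$ iff $\mathcal L_e\cap\mathcal L_{e'}\ne\emptyset$; bag label set $\mathcal L_B=\bigcup_{e\in B}\mathcal L_e$. The width of $G^{\mathcal X}$ is $\mathrm{ew}_{\mathcal X}(G^{\mathcal X})=1+\max|\mathcal L_B|$ over all bags, and $\mathrm{ew}(G)$ is the minimum width over all extraction orders of $G$. *)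

(* Defs.v *)
From mathcomp Require Import all_boot.
From mathcomp Require Import boolp.
Set Implicit Arguments. Unset Strict Implicit. Unset Printing Implicit Defensive.

(* A directed multigraph is a finite node type [V] together with a sequence
   [E : seq (V * V)] of directed edges; the k-th edge is [nth _ E k], so
   parallel edges are distinct entries of the sequence. *)

Section ExtractionWidth.
Variable V : finType.
Implicit Types (E EX : seq (V * V)).

Definition swap_edge (e : V * V) : V * V := (e.2, e.1).

Definition flips E EX : bool :=
  all2 (fun e f => (f == e) || (f == swap_edge e)) E EX.

Fixpoint dpath EX (a b : V) (ks : seq nat) : bool :=
  match ks with
  | [::] => a == b
  | k :: ks' => [&& k < size EX, (nth (a, a) EX k).1 == a &
                   dpath EX (nth (a, a) EX k).2 b ks']
  end.

Fixpoint path_nodes EX (a : V) (ks : seq nat) : seq V :=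
  match ks with
  | [::] => [:: a]
  | k :: ks' => a :: path_nodes EX (nth (a, a) EX k).2 ks'
  end.

Definition acyclic EX : Prop :=
  forall (a : V) (ks : seq nat), dpath EX a a ks -> ks = [::].

Definition rooted EX (s : V) : Prop :=
  forall v : V, exists ks, dpath EX s v ks.

Definition extraction_order E EX (s : V) : Prop :=
  [/\ flips E EX, acyclic EX & rooted EX s].

Definition confluence EX (a b : V) (p1 p2 : seq nat) : Prop :=
  [/\ dpath EX a b p1, dpath EX a b p2, p1 != p2 &
      forall v, v \in path_nodes EX a p1 -> v \in path_nodes EX a p2 ->
                v = a \/ v = b].

Definition label_set EX (k : 'I_(size EX)) : {set V} :=
  [set b | `[< exists a p1 p2, confluence EX a b p1 p2 /\
                 ((val k \in p1) \/ (val k \in p2)) >]].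

Definition src EX (k : 'I_(size EX)) : V := (tnth (in_tuple EX) k).1.

(* Two outgoing edges of the same node are related when their label sets
   intersect; bags are the classes of the generated equivalence relation
   (on the outgoing edges of a node). *)
Definition bag_rel EX : rel 'I_(size EX) :=
  fun k k' => (src k == src k') && (label_set k :&: label_set k' != set0).

Definition bag EX (k : 'I_(size EX)) : {set 'I_(size EX)} :=
  [set k' | connect (@bag_rel EX) k k'].

Definition bag_label_set EX (k : 'I_(size EX)) : {set V} :=
  \bigcup_(k' in bag k) label_set k'.

Definition ewX EX : nat := 1 + \max_(k < size EX) #|bag_label_set k|.

(* ew(G) <= w, where ew(G) is the minimum width over all extraction orders *)
Definition ew_le E (w : nat) : Prop :=
  exists EX s, extraction_order E EX s /\ ewX EX <= w.

Definition degree E (v : V) : nat :=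
  count (fun e : V * V => (e.1 == v) || (e.2 == v)) E.

Definition max_degree E : nat := \max_(v : V) degree E v.

End ExtractionWidth.

(* Undirected path i - w_1 - ... - w_n - j through new nodes w_1..w_n,
   as the list of its edges in the orientation i -> w_1 -> ... -> j. *)
Definition path_edges (V W : finType) (i j : V) (ws : seq W)
  : seq ((V + W) * (V + W)) :=
  let ns := inl i :: rcons [seq inr w | w <- ws] (inl j) in
  zip ns (behead ns).

Definition lift_edges (V W : finType) (E : seq (V * V))
  : seq ((V + W) * (V + W)) :=
  [seq (inl e.1, inl e.2) | e <- E].

(* Main.v *)
Require Import Defs.
From mathcomp Require Import all_boot.
From mathcomp Require Import boolp zify.
Set Implicit Arguments. Unset Strict Implicit. Unset Printing Implicit Defensive.

Lemma nthD (T : Type) (s : seq T) x y k : k < size s -> nth x s k = nth y s k.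
Proof. exact: set_nth_default. Qed.

Section Paths.
Variable V : finType.
Variable EX : seq (V * V).

Fixpoint pend (a : V) (ks : seq nat) : V :=
  match ks with [::] => a | k :: ks' => pend (nth (a, a) EX k).2 ks' end.

Lemma dpath_pend a b ks : dpath EX a b ks -> pend a ks = b.
Proof.
elim: ks a => [|k ks IH] a /=; first by move/eqP.
by case/and3P=> _ _ /IH.
Qed.

Lemma dpath_cat a b p q :
  dpath EX a b (p ++ q) = dpath EX a (pend a p) p && dpath EX (pend a p) b q.
Proof.
elim: p a => [|k p IH] a /=; first by rewrite eqxx.
by rewrite IH !andbA.
Qed.

Lemma path_nodes_head a p : path_nodes EX a p = a :: behead (path_nodes EX a p).
Proof. by case: p. Qed.

Lemma pend_in a p : pend a p \in path_nodes EX a p.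
Proof.
elim: p a => [|k p IH] a /=; first by rewrite inE.
by rewrite inE IH orbT.
Qed.

Lemma path_nodes_cat a p q :
  path_nodes EX a (p ++ q) = path_nodes EX a p ++ behead (path_nodes EX (pend a p) q).
Proof.
elim: p a => [|k p IH] a /=; first by rewrite -path_nodes_head.
by rewrite IH.
Qed.

Lemma mem_nodes_cat v a p q :
  (v \in path_nodes EX a (p ++ q)) =
  (v \in path_nodes EX a p) || (v \in path_nodes EX (pend a p) q).
Proof.
rewrite path_nodes_cat mem_cat.
have -> : (v \in path_nodes EX (pend a p) q) =
   (v == pend a p) || (v \in behead (path_nodes EX (pend a p) q)).
  by rewrite {1}path_nodes_head inE.
by case: (v =P pend a p) => [->|_] //=; rewrite pend_in.
Qed.

Lemma dpath_split a b p k : dpath EX a b p -> k \in p ->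
  exists p1 p2, [/\ p = p1 ++ k :: p2, k < size EX,
    dpath EX a (nth (a, a) EX k).1 p1 & dpath EX (nth (a, a) EX k).2 b p2].
Proof.
move=> H Hk; case/splitPr: Hk H => p1 p2; exists p1, p2.
move: H; rewrite dpath_cat /= => /and4P [H1 Hk /eqP Hs H2].
rewrite (nthD _ (a, a) Hk) in Hs H2.
by split=> //; rewrite Hs.
Qed.

Lemma edge_nodes a b p k : dpath EX a b p -> k \in p ->
  ((nth (a, a) EX k).1 \in path_nodes EX a p) /\
  ((nth (a, a) EX k).2 \in path_nodes EX a p).
Proof.
move=> H Hk; have [p1 [p2 [-> Hks H1 H2]]] := dpath_split H Hk.
rewrite !mem_nodes_cat (dpath_pend H1) /= !inE eqxx /=.
rewrite orbT; split=> //.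
apply/orP; right; apply/orP; right.
by rewrite path_nodes_head inE (nthD _ (a, a) Hks) eqxx.
Qed.

Lemma dpath_rcons a b p k : k < size EX -> dpath EX a (nth (a, a) EX k).1 p ->
  (nth (a, a) EX k).2 = b -> dpath EX a b (rcons p k).
Proof.
move=> Hk Hp Hb; rewrite -cats1 dpath_cat (dpath_pend Hp) Hp /= Hk.
by rewrite !(nthD _ (a, a) Hk) eqxx Hb eqxx.
Qed.


Lemma conf_sym a b p1 p2 : confluence EX a b p1 p2 -> confluence EX a b p2 p1.
Proof.
case=> H1 H2 Hne Hd; split=> //; first by rewrite eq_sym.
by move=> v h2 h1; apply: Hd.
Qed.

Lemma labelE (k : 'I_(size EX)) b : b \in label_set k <->
  exists a p1 p2, confluence EX a b p1 p2 /\ val k \in p1.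
Proof.
rewrite inE; split => [/asboolP [a [p1 [p2 [Hc [H|H]]]]]|[a [p1 [p2 [Hc H]]]]].
- by exists a, p1, p2.
- by exists a, p2, p1; split=> //; apply: conf_sym.
- by apply/asboolP; exists a, p1, p2; split=> //; left.
Qed.

End Paths.

Lemma connect_map (T T' : finType) (e : rel T) (e' : rel T') (f : T -> T') :
  (forall x y, e x y -> connect e' (f x) (f y)) ->
  forall x y, connect e x y -> connect e' (f x) (f y).
Proof.
move=> H x y /connectP [p Hp ->]; elim: p x Hp => [|z p IH] x /=.
  by rewrite connect0.
by case/andP => /H Hxz /IH; apply: connect_trans Hxz.
Qed.

Section Gadget.
Variables (V V' : finType) (phi : V -> V') (psi : V' -> option V).
Hypothesis psiK : forall v, psi (phi v) = Some v.
Hypothesis psiS : forall x v, psi x = Some v -> phi v = x.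
Variables (EX : seq (V * V)) (G : seq (V' * V')) (k0 : nat) (i0 j0 : V).
Variable r : V' -> nat.
Hypothesis k0m : k0 < size EX.
Hypothesis Ek0 : nth (i0, i0) EX k0 = (i0, j0).
Hypothesis acEX : acyclic EX.

Definition liftE := [seq (phi e.1, phi e.2) | e <- EX].
Definition EX' := liftE ++ G.

Hypothesis Hg : forall g, g \in G ->
  (g.1 = phi i0 \/ psi g.1 = None) /\ (g.2 = phi j0 \/ psi g.2 = None).
Hypothesis Hr : forall g, g \in G -> psi g.1 = None -> psi g.2 = None -> r g.1 < r g.2.
Hypothesis Hin : forall k k' d d', k < size EX' -> k' < size EX' ->
  psi (nth d EX' k).2 = None -> (nth d EX' k).2 = (nth d' EX' k').2 -> k = k'.
Hypothesis Hout : forall k k' d d', k < size EX' -> k' < size EX' ->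
  psi (nth d EX' k).1 = None -> (nth d EX' k).1 = (nth d' EX' k').1 -> k = k'.
Hypothesis Hex : forall x, psi x = None -> exists2 g, g \in G & g.2 = x.

Lemma phi_inj : injective phi.
Proof. by move=> u v H; have := psiK u; rewrite H psiK => -[]. Qed.

Lemma size_EX' : size EX' = size EX + size G.
Proof. by rewrite size_cat size_map. Qed.

Lemma nth_old k d : k < size EX ->
  nth d EX' k = (phi (nth (i0, i0) EX k).1, phi (nth (i0, i0) EX k).2).
Proof.
move=> Hk; rewrite nth_cat size_map Hk.
by rewrite (nthD _ (phi i0, phi i0)) ?size_map // (nth_map (i0, i0)).
Qed.

Lemma nth_new k d : size EX <= k -> k < size EX' -> nth d EX' k \in G.
Proof.
move=> H1 H2; rewrite nth_cat size_map ltnNge H1 /=.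
by apply: mem_nth; rewrite ltn_subLR // -size_EX'.
Qed.

Definition anchor x := if psi x is Some v then v else i0.

Lemma anchor_phi v : anchor (phi v) = v.
Proof. by rewrite /anchor psiK. Qed.

Lemma gsrc g : g \in G -> anchor g.1 = i0 /\ (psi g.1 <> None -> g.1 = phi i0).
Proof.
move=> /Hg [[->|H] _]; first by rewrite anchor_phi.
by rewrite /anchor H.
Qed.

Lemma gtgt g v : g \in G -> psi g.2 = Some v -> v = j0 /\ g.2 = phi j0.
Proof.
move=> /Hg [_ [->|H]]; last by rewrite H.
by rewrite psiK => -[<-].
Qed.

Definition fproj k :=
  if k < size EX then [:: k]
  else if psi (nth (phi i0, phi i0) EX' k).2 is Some _ then [:: k0] else [::].
Definition proj p := flatten (map fproj p).

Lemma proj_cons k p : proj (k :: p) = fproj k ++ proj p.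
Proof. by []. Qed.

Lemma proj_cat p q : proj (p ++ q) = proj p ++ proj q.
Proof. by rewrite /proj map_cat flatten_cat. Qed.


Lemma fproj_new k d : size EX <= k -> k < size EX' ->
  fproj k = if psi (nth d EX' k).2 is Some _ then [:: k0] else [::].
Proof.
by move=> H1 H2; rewrite /fproj ltnNge H1 /= (nthD _ d H2).
Qed.

Lemma fproj_old k : k < size EX -> fproj k = [:: k].
Proof. by rewrite /fproj => ->. Qed.

Lemma size_EX'_le k : k < size EX -> k < size EX'.
Proof. by rewrite size_EX' => H; apply: leq_trans H (leq_addr _ _). Qed.

Lemma proj_path x y p : dpath EX' x y p -> dpath EX (anchor x) (anchor y) (proj p).
Proof.
elim: p x => [|k p IH] x /=; first by move/eqP => ->; rewrite eqxx.
case/and3P => Hk /eqP Hs /IH {}IH.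
rewrite proj_cons.
case: (ltnP k (size EX)) => Hkm.
  move: Hs IH; rewrite fproj_old // nth_old //= => <-; rewrite !anchor_phi => IH.
  by rewrite Hkm (nthD _ (i0, i0) Hkm) eqxx.
have Hg' := nth_new (x, x) Hkm Hk.
have [Ha _] := gsrc Hg'.
have Hax : anchor x = i0 by move: Ha; rewrite Hs.
rewrite (fproj_new (x, x) Hkm Hk) Hax.
case E2: (psi (nth (x, x) EX' k).2) => [v|] /=.
  have [Hv _] := gtgt Hg' E2.
  move: IH; rewrite /anchor E2 Hv => IH.
  by rewrite k0m Ek0 eqxx.
by move: IH; rewrite /anchor E2.
Qed.


Lemma src_new_or x k : size EX <= k -> k < size EX' ->
  (nth (x, x) EX' k).1 = x -> psi x = None \/ x = phi i0.
Proof.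
move=> Hkm Hk Hs; have [_ H] := gsrc (nth_new (x, x) Hkm Hk).
rewrite Hs in H; case E: (psi x) => [u|]; last by left.
by right; apply: H; rewrite E.
Qed.

Lemma proj_nodes x y p v : dpath EX' x y p ->
  v \in path_nodes EX (anchor x) (proj p) ->
  phi v \in path_nodes EX' x p \/ (v = i0 /\ psi x = None).
Proof.
elim: p x => [|k p IH] x /=.
  move=> _; rewrite inE => /eqP ->; rewrite /anchor.
  case E: (psi x) => [u|]; last by right.
  by left; rewrite (psiS E) inE.
case/and3P => Hk /eqP Hs Hp.
rewrite proj_cons inE.
case: (ltnP k (size EX)) => Hkm.
  rewrite fproj_old //= inE.
  move: Hs Hp; rewrite nth_old //= => Hs Hp.
  have Hax : anchor x = (nth (i0, i0) EX k).1 by rewrite -Hs anchor_phi.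
  case/orP => [/eqP ->|Hv]; first by left; rewrite Hax Hs eqxx.
  rewrite Hax (nthD _ (i0, i0) Hkm) -(anchor_phi (nth (i0, i0) EX k).2) in Hv.
  case: (IH _ Hp Hv) => [->|[_]]; first by left; rewrite orbT.
  by rewrite psiK.
have Hg' := nth_new (x, x) Hkm Hk.
have [Ha _] := gsrc Hg'.
have Hax : anchor x = i0 by move: Ha; rewrite Hs.
have Hxo := src_new_or Hkm Hk Hs.
rewrite (fproj_new (x, x) Hkm Hk) Hax.
case E2: (psi (nth (x, x) EX' k).2) => [w|] /=.
  have [Hw _] := gtgt Hg' E2.
  rewrite inE; case/orP => [/eqP ->|Hv].
    by case: Hxo => [->|->]; [right | left; rewrite eqxx].
  rewrite Ek0 /= -Hw in Hv.
  have Hz : anchor (nth (x, x) EX' k).2 = w by rewrite /anchor E2.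
  rewrite -Hz in Hv.
  by case: (IH _ Hp Hv) => [->|[_]]; [left; rewrite orbT | rewrite E2].
have Hz : anchor (nth (x, x) EX' k).2 = i0 by rewrite /anchor E2.
move=> Hv; rewrite -Hz in Hv.
case: (IH _ Hp Hv) => [->|[-> _]]; first by left; rewrite orbT.
by case: Hxo => [->|->]; [right | left; rewrite eqxx].
Qed.


Lemma old_src x k : k < size EX -> (nth (x, x) EX' k).1 = x -> psi x <> None.
Proof. by move=> Hkm; rewrite nth_old //= => <-; rewrite psiK. Qed.

Lemma proj_k0 x y p : dpath EX' x y p -> psi x = None -> psi y <> None ->
  k0 \in proj p.
Proof.
elim: p x => [|k p IH] x /=; first by move/eqP => -> ->.
case/and3P => Hk /eqP Hs Hp Hx Hy.
case: (ltnP k (size EX)) => Hkm; first by case: (old_src Hkm Hs).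
rewrite proj_cons mem_cat (fproj_new (x, x) Hkm Hk).
case E2: (psi (nth (x, x) EX' k).2) => [w|]; first by rewrite inE eqxx.
by rewrite (IH _ Hp E2 Hy) orbT.
Qed.

Lemma proj_all x y p : dpath EX' x y p -> psi y <> None -> k0 \notin proj p ->
  all (fun k => k < size EX) p.
Proof.
elim: p x => [|k p IH] x //=.
case/and3P => Hk /eqP Hs Hp Hy.
rewrite proj_cons mem_cat negb_or => /andP [H1 H2].
case: (ltnP k (size EX)) => Hkm /=; first exact: IH Hp Hy H2.
move: H1; rewrite (fproj_new (x, x) Hkm Hk).
case E2: (psi (nth (x, x) EX' k).2) => [w|]; first by rewrite inE eqxx.
by rewrite (proj_k0 Hp E2 Hy) in H2.
Qed.

Lemma proj_id p : all (fun k => k < size EX) p -> proj p = p.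
Proof.
elim: p => [|k p IH] //= /andP [Hk Hp].
by rewrite proj_cons fproj_old // IH.
Qed.

Lemma proj_rank x y p : dpath EX' x y p -> psi x = None -> k0 \notin proj p ->
  p = [::] \/ r x < r y.
Proof.
elim: p x => [|k p IH] x /=; first by left.
case/and3P => Hk /eqP Hs Hp Hx.
rewrite proj_cons mem_cat negb_or => /andP [H1 H2]; right.
case: (ltnP k (size EX)) => Hkm; first by case: (old_src Hkm Hs).
move: H1; rewrite (fproj_new (x, x) Hkm Hk).
case E2: (psi (nth (x, x) EX' k).2) => [w|]; first by rewrite inE eqxx.
move=> _.
have Hg' := nth_new (x, x) Hkm Hk.
have Hlt := Hr Hg' (etrans (congr1 psi Hs) Hx) E2.
rewrite Hs in Hlt.
case: (IH _ Hp E2 H2) => [Hn|]; last exact: ltn_trans.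
by move: Hp; rewrite Hn /= => /eqP <-.
Qed.

Lemma acyc' : acyclic EX'.
Proof.
move=> x p Hp.
have /acEX Hn := proj_path Hp.
case E: (psi x) => [u|].
  have Ha : all (fun k => k < size EX) p.
    by apply: (proj_all Hp); rewrite ?E // Hn.
  by rewrite -(proj_id Ha).
case: (proj_rank Hp E); by rewrite ?Hn ?ltnn.
Qed.

Lemma lift_path a b q : dpath EX a b q -> dpath EX' (phi a) (phi b) q.
Proof.
elim: q a => [|k q IH] a /=; first by move/eqP => ->.
case/and3P => Hk /eqP Hs Hq.
rewrite size_EX'_le // nth_old //= -Hs (nthD _ (i0, i0) Hk) eqxx /=.
by rewrite -(nthD (a, a) _ Hk); apply: IH.
Qed.

Lemma rooted' s : rooted EX s -> rooted EX' (phi s).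
Proof.
move=> Hs x.
case E: (psi x) => [u|].
  by have [ks Hks] := Hs u; exists ks; rewrite -(psiS E); apply: lift_path.
suff H : forall n x, r x < n -> psi x = None -> exists ks, dpath EX' (phi s) x ks.
  exact: (H (r x).+1).
elim=> [|n IHn] {E}x // Hrx Ex.
have [g Hg1 Hg2] := Hex Ex.
have Hidx : size EX + index g G < size EX'.
  by rewrite size_EX' ltn_add2l index_mem.
have Hnth : forall d, nth d EX' (size EX + index g G) = g.
  by move=> d; rewrite nth_cat size_map ltnNge leq_addr /= addKn nth_index.
have [ks Hks] : exists ks, dpath EX' (phi s) g.1 ks.
  case E1: (psi g.1) => [u|].
    have [ks Hks] := Hs u; exists ks; rewrite -(psiS E1); exact: lift_path.
  have := Hr Hg1 E1; rewrite Hg2 => /(_ Ex) H.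
  apply: IHn E1.
  by apply: leq_trans H _.
exists (rcons ks (size EX + index g G)).
by apply: dpath_rcons; rewrite ?Hnth.
Qed.


Definition ko : 'I_(size EX) := Ordinal k0m.
Definition rho (k : 'I_(size EX')) : 'I_(size EX) := insubd ko (val k).

Lemma rhoE k : val (rho k) = if val k < size EX then val k else k0.
Proof. by rewrite /rho val_insubd. Qed.

Lemma rho_in a b p (k : 'I_(size EX')) : dpath EX' a b p -> psi b <> None ->
  val k \in p -> val (rho k) \in proj p.
Proof.
move=> Hp Hb Hk; have [p1 [p2 [Ep Hks H1 H2]]] := dpath_split Hp Hk.
rewrite Ep proj_cat proj_cons !mem_cat rhoE.
case: (ltnP (val k) (size EX)) => Hkm.
  by rewrite fproj_old // inE eqxx orbT.
rewrite (fproj_new (a, a) Hkm Hks).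
case E2: (psi (nth (a, a) EX' k).2) => [w|]; first by rewrite inE eqxx orbT.
by rewrite (proj_k0 H2 E2 Hb) !orbT.
Qed.

Lemma conf_old a b p1 p2 : confluence EX' a b p1 p2 -> psi b <> None.
Proof.
case=> H1 H2 Hne Hd Eb.
case/lastP: p1 H1 Hne Hd => [|p1 e1] H1 Hne Hd.
  move: H1 => /= /eqP Eab; rewrite Eab in H2.
  by rewrite (acyc' H2) eqxx in Hne.
case/lastP: p2 H2 Hne Hd => [|p2 e2] H2 Hne Hd.
  move: H2 => /= /eqP Eab; rewrite Eab in H1.
  by have := acyc' H1; case: (p1).
move: H1; rewrite -cats1 dpath_cat /= => /andP [Q1 /and3P [He1 /eqP S1 /eqP T1]].
move: H2; rewrite -cats1 dpath_cat /= => /andP [Q2 /and3P [He2 /eqP S2 /eqP T2]].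
set c1 := pend EX' a p1 in Q1 S1 T1.
set c2 := pend EX' a p2 in Q2 S2 T2.
have E12 : e1 = e2.
  apply: (@Hin e1 e2 (c1, c1) (c2, c2) He1 He2); first by rewrite T1.
  by rewrite T1 T2.
subst e2.
have Ec : c1 = c2 by rewrite -S1 -S2 (nthD _ (c2, c2) He1).
have N1 : c1 \in path_nodes EX' a (rcons p1 e1) by rewrite -cats1 mem_nodes_cat pend_in.
have N2 : c2 \in path_nodes EX' a (rcons p2 e1).
  by rewrite -cats1 mem_nodes_cat pend_in.
rewrite -Ec in N2.
case: (Hd _ N1 N2) => Hc.
  rewrite Hc in Q1; rewrite -Ec Hc in Q2.
  by rewrite (acyc' Q1) (acyc' Q2) eqxx in Hne.
have : dpath EX' c1 c1 [:: e1] by rewrite /= He1 S1 T1 Hc !eqxx.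
by move/acyc'.
Qed.

Lemma i0j0 : i0 != j0.
Proof.
apply/eqP => E.
have : dpath EX i0 i0 [:: k0] by rewrite /= k0m Ek0 /= E !eqxx.
by move/acEX.
Qed.

Lemma label_incl (k : 'I_(size EX')) b : b \in label_set k ->
  exists b', b = phi b' /\
    ((b' = j0 /\ val (rho k) = k0) \/ b' \in label_set (rho k)).
Proof.
case/labelE => a [p1 [p2 [Hc Hk]]].
have Hb := conf_old Hc.
case Eb: (psi b) => [b'|] //.
exists b'; split; first by rewrite (psiS Eb).
have [H1 H2 Hne Hd] := Hc.
have Ab : anchor b = b' by rewrite /anchor Eb.
have Q1 := proj_path H1; have Q2 := proj_path H2.
rewrite Ab in Q1 Q2.
have Hr1 := rho_in H1 Hb Hk.
case: (eqVneq (proj p1) (proj p2)) => Hpq.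
  left.
  have Hk0 : k0 \in proj p1.
    apply/negPn/negP => Hn.
    have A1 := proj_all H1 Hb Hn.
    have A2 : all (fun k => k < size EX) p2 by apply: (proj_all H2 Hb); rewrite -Hpq.
    by move: Hne; rewrite -(proj_id A1) -(proj_id A2) Hpq eqxx.
  have [s1 [s2 [Es Hk0s S1 S2]]] := dpath_split Q1 Hk0.
  have [N1 N2] := edge_nodes Q1 Hk0.
  rewrite (nthD _ (i0, i0) Hk0s) Ek0 /= in S1 S2 N1 N2.
  have ij := i0j0.
  have Hj1 : phi j0 \in path_nodes EX' a p1.
    by case: (proj_nodes H1 N2) => // [[E _]]; rewrite E eqxx in ij.
  have Hj2 : phi j0 \in path_nodes EX' a p2.
    by rewrite Hpq in N2; case: (proj_nodes H2 N2) => // [[E _]]; rewrite E eqxx in ij.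
  have Hbj : b' = j0.
    case: (Hd _ Hj1 Hj2) => Hj; last by apply: phi_inj; rewrite Hj (psiS Eb).
    rewrite -Hj anchor_phi in S1.
    have : dpath EX j0 j0 (rcons s1 k0) by apply: dpath_rcons; rewrite // (nthD _ (i0, i0) k0m) Ek0.
    by move/acEX; case: (s1).
  have Ha : anchor a = i0.
    case: (proj_nodes H1 N1) => [Hi1|[_ Ea]]; last by rewrite /anchor Ea.
    have N1' := N1; rewrite Hpq in N1'.
    case: (proj_nodes H2 N1') => [Hi2|[_ Ea]]; last by rewrite /anchor Ea.
    case: (Hd _ Hi1 Hi2) => Hi; first by rewrite -Hi anchor_phi.
    by move: ij; rewrite Hbj in Eb; rewrite -(psiS Eb) in Hi; rewrite (phi_inj Hi) eqxx.
  rewrite Ha in S1; rewrite Hbj in S2.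
  move: Hr1; rewrite Es (acEX S1) (acEX S2) inE => /eqP.
  by split.
right; apply/labelE; exists (anchor a), (proj p1), (proj p2); split=> //.
split=> // v Hv1 Hv2.
case: (proj_nodes H1 Hv1) => [Hi1|[-> Ea]]; last by left; rewrite /anchor Ea.
case: (proj_nodes H2 Hv2) => [Hi2|[-> Ea]]; last by left; rewrite /anchor Ea.
case: (Hd _ Hi1 Hi2) => Hi; first by left; rewrite -Hi anchor_phi.
by right; apply: phi_inj; rewrite Hi (psiS Eb).
Qed.


Lemma srcE (T : finType) (s : seq (T * T)) (k : 'I_(size s)) d : src k = (nth d s k).1.
Proof. by rewrite /src (tnth_nth d). Qed.

Lemma key (e : 'I_(size EX)) : src e = i0 -> j0 \in label_set e -> j0 \in label_set ko.
Proof.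
rewrite (srcE _ (i0, i0)) => Hs /labelE [a [p1 [p2 [Hc He]]]].
case: (boolP (k0 \in p1)) => H01; first by apply/labelE; exists a, p1, p2.
case: (boolP (k0 \in p2)) => H02.
  by apply/labelE; exists a, p2, p1; split=> //; apply: conf_sym.
have [H1 H2 Hne Hd] := Hc.
have [r1 [r2 [Ep Hes R1 R2]]] := dpath_split H1 He.
rewrite (nthD _ (i0, i0) Hes) Hs in R1.
have P1 : dpath EX a j0 (rcons r1 k0).
  by apply: dpath_rcons; rewrite // (nthD _ (i0, i0) k0m) Ek0.
apply/labelE; exists a, (rcons r1 k0), p2; split; last by rewrite mem_rcons inE eqxx.
split=> //.
  by apply/negP => /eqP E; move: H02; rewrite -E mem_rcons inE eqxx.
move=> v; rewrite -cats1 mem_nodes_cat (dpath_pend R1) /= !inE.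
rewrite Ek0 /=.
case/or3P => [Hv|/eqP Hv|/eqP Hv] Hv2; last by right.
- by apply: Hd => //; rewrite Ep mem_nodes_cat Hv.
- by apply: Hd => //; rewrite Hv Ep mem_nodes_cat -{1}(dpath_pend R1) pend_in.
Qed.


Lemma bag_rel_of (T : finType) (s : seq (T * T)) (k1 k2 : 'I_(size s)) b :
  src k1 = src k2 -> b \in label_set k1 -> b \in label_set k2 -> bag_rel k1 k2.
Proof.
move=> Hs H1 H2; rewrite /bag_rel Hs eqxx /=.
by apply/set0Pn; exists b; rewrite inE H1 H2.
Qed.

Lemma src_rho (k : 'I_(size EX')) u : psi (src k) = Some u -> src (rho k) = u.
Proof.
rewrite !(srcE _ (i0, i0)) (srcE _ (phi i0, phi i0)) rhoE.
case: (ltnP (val k) (size EX)) => Hkm.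
  by rewrite nth_old //= psiK => -[].
have [_ H] := gsrc (nth_new (phi i0, phi i0) Hkm (ltn_ord k)).
move=> E; rewrite Ek0 /=.
have H' : (nth (phi i0, phi i0) EX' k).1 = phi i0 by apply: H; rewrite E.
by rewrite H' psiK in E; case: E.
Qed.

Lemma bag_step (k k' : 'I_(size EX')) : bag_rel k k' -> connect (@bag_rel _ EX) (rho k) (rho k').
Proof.
case/andP => /eqP Hs /set0Pn [c /setIP [Hc Hc']].
case Ex: (psi (src k)) => [u|]; last first.
  have Ekk : k = k'.
    apply: val_inj; apply: (@Hout k k' (phi i0, phi i0) (phi i0, phi i0)) => //.
      by rewrite -(srcE _ (phi i0, phi i0)).
    by rewrite -!(srcE _ (phi i0, phi i0)).
  by rewrite Ekk connect0.
have S1 := src_rho Ex.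
have S2 : src (rho k') = u by apply: src_rho; rewrite -Hs.
have Skk : src (rho k) = src (rho k') by rewrite S1 S2.
have [b1 [E1 C1]] := label_incl Hc.
have [b2 [E2 C2]] := label_incl Hc'.
have Eb : b1 = b2 by apply: phi_inj; rewrite -E1 -E2.
subst b2.
have Hko : forall k1 : 'I_(size EX'), val (rho k1) = k0 -> rho k1 = ko.
  by move=> k1 H; apply: val_inj.
case: C1 => [[Hb1 R1]|L1]; case: C2 => [[Hb2 R2]|L2].
- by rewrite (Hko _ R1) (Hko _ R2) connect0.
- have Hk := Hko _ R1.
  have Hsrc : src (rho k') = i0 by rewrite -Skk Hk (srcE _ (i0, i0)) /= Ek0.
  have Lk' : j0 \in label_set (rho k') by rewrite -Hb1.
  apply: connect1; rewrite Hk.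
  apply: (@bag_rel_of _ _ _ _ j0 _ (key Hsrc Lk') Lk').
  by rewrite -Hk Skk.
- have Hk := Hko _ R2.
  have Hsrc : src (rho k) = i0 by rewrite Skk Hk (srcE _ (i0, i0)) /= Ek0.
  have Lk : j0 \in label_set (rho k) by rewrite -Hb2.
  apply: connect1; rewrite Hk.
  apply: (@bag_rel_of _ _ _ _ j0 _ Lk (key Hsrc Lk)).
  by rewrite -Hk Skk.
- by apply: connect1; apply: (@bag_rel_of _ _ _ _ b1).
Qed.


Lemma bls_sub (k : 'I_(size EX')) :
  bag_label_set k \subset phi j0 |: (phi @: bag_label_set (rho k)).
Proof.
apply/subsetP => c /bigcupP [k' Hk' Hc].
have Hcon : connect (@bag_rel _ EX) (rho k) (rho k').
  by apply: (connect_map bag_step); move: Hk'; rewrite inE.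
have [b [-> C]] := label_incl Hc.
rewrite !inE; case: C => [[-> _]|L]; first by rewrite eqxx.
apply/orP; right; apply: imset_f.
by apply/bigcupP; exists (rho k'); rewrite // inE.
Qed.

Lemma ewX_le : ewX EX' <= (ewX EX).+1.
Proof.
have Hb : forall k : 'I_(size EX'), #|bag_label_set k| <= (\max_(k1 < size EX) #|bag_label_set k1|) + 1.
  move=> k; apply: leq_trans (subset_leq_card (bls_sub k)) _.
  rewrite cardsU1 addnC; apply: leq_add; last by case: (_ \notin _).
  apply: leq_trans (leq_imset_card _ _) _.
  exact: leq_bigmax.
rewrite /ewX -[X in _ <= X]addn1 -addnA leq_add2l.
by apply/bigmax_leqP => k _; exact: Hb.
Qed.


Lemma gadget_main s : rooted EX s ->
  [/\ acyclic EX', rooted EX' (phi s) & ewX EX' <= (ewX EX).+1].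
Proof. by move=> Hs; split; [exact: acyc' | exact: rooted' | exact: ewX_le]. Qed.

End Gadget.

Section Flips.
Variable V : finType.

Lemma flips_size (E X : seq (V * V)) : flips E X -> size E = size X.
Proof. by elim: E X => [|e E IH] [|f X] //= /andP [_ /IH ->]. Qed.

Lemma flips_nth (E X : seq (V * V)) k d : flips E X -> k < size E ->
  (nth d X k == nth d E k) || (nth d X k == swap_edge (nth d E k)).
Proof.
elim: E X k => [|e E IH] [|f X] k //= /andP [H1 H2].
by case: k => [|k] //= Hk; apply: IH.
Qed.

Lemma flips_cat (E1 X1 E2 X2 : seq (V * V)) :
  flips E1 X1 -> flips E2 X2 -> flips (E1 ++ E2) (X1 ++ X2).
Proof.
elim: E1 X1 => [|e E IH] [|f X] //= /andP [H1 H2] H3.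
by rewrite H1 IH.
Qed.

Lemma max_degree_pos (E : seq (V * V)) i j : (i, j) \in E -> 0 < max_degree E.
Proof.
move=> H; apply: leq_trans (@leq_bigmax V (degree E) i).
rewrite /degree -has_count; apply/hasP; exists (i, j) => //=.
by rewrite eqxx.
Qed.

End Flips.

Lemma liftE_id (V : finType) (EX : seq (V * V)) : liftE (fun v => v) EX = EX.
Proof. by elim: EX => [|[a b] s IH] //=; rewrite /liftE /= in IH *; rewrite IH. Qed.

Lemma setup (V : finType) (E EX : seq (V * V)) i j :
  (i, j) \in E -> flips E EX ->
  exists k0 i0 j0, [/\ k0 < size EX, nth (i0, i0) EX k0 = (i0, j0) &
    ((i0, j0) = (i, j) \/ (i0, j0) = (j, i))].
Proof.
move=> H Hf.
have Hk : index (i, j) E < size E by rewrite index_mem.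
have Hk' : index (i, j) E < size EX by rewrite -(flips_size Hf).
exists (index (i, j) E), (nth (i, i) EX (index (i, j) E)).1,
  (nth (i, i) EX (index (i, j) E)).2.
split=> //.
  by rewrite (nthD _ (i, i) Hk'); case: (nth _ _ _).
have := flips_nth (i, i) Hf Hk; rewrite nth_index //.
by case: (nth _ _ _) => a b /= /orP [/eqP ->|/eqP ->]; [left|right].
Qed.

Lemma part1 (V : finType) (E : seq (V * V)) (i j : V) :
  (i, j) \in E ->
  (forall (orient : seq bool) (w : nat),
     ew_le E w ->
     ew_le (E ++ [seq if b then (i, j) else (j, i) | b <- orient])
           (w + max_degree E)).
Proof.
move=> Hij orient w [EX [s [[Hf Hac Hro] Hw]]].
have [k0 [i0 [j0 [k0m Ek0 Hor]]]] := setup Hij Hf.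
set G := [seq (i0, j0) | _ <- orient].
have Hg : forall g, g \in G ->
    (g.1 = i0 \/ (Some g.1 : option V) = None) /\ (g.2 = j0 \/ (Some g.2 : option V) = None).
  by move=> g /mapP [b _ ->]; split; left.
have [A R Wd] := @gadget_main V V (fun v => v) Some (fun v => erefl)
  (fun x v H => esym (Some_inj H)) EX G k0 i0 j0 (fun _ => 0) k0m Ek0 Hac Hg
  (fun g _ H => match H with end)
  (fun k k' d d' _ _ H => match H with end)
  (fun k k' d d' _ _ H => match H with end)
  (fun x H => match H with end) s Hro.
exists (EX' (fun v => v) EX G), s; split; first split => //.
  rewrite /EX' liftE_id; apply: flips_cat => //.
  rewrite /G; elim: orient {G Hg A R Wd} => [|b o IH] //=; rewrite IH andbT.
  by case: b; case: Hor => -[-> ->]; rewrite eqxx ?orbT.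
apply: leq_trans Wd _; rewrite -addn1 leq_add //.
exact: max_degree_pos Hij.
Qed.

Section Part2.
Variables (V W : finType) (i j : V).

Fixpoint ch (x : V + W) (ws : seq W) : seq ((V + W) * (V + W)) :=
  match ws with
  | [::] => [:: (x, inl j)]
  | w :: ws' => (x, inr w) :: ch (inr w) ws'
  end.

Lemma pe_ch ws : path_edges i j ws = ch (inl i) ws.
Proof.
rewrite /path_edges /=; move: (inl i : V + W) => x.
by elim: ws x => [|w ws IH] x //=; rewrite IH.
Qed.

Lemma ch_fst x ws : map fst (ch x ws) = x :: map inr ws.
Proof. by elim: ws x => [|w ws IH] x //=; rewrite IH. Qed.

Lemma ch_snd x ws : map snd (ch x ws) = rcons (map inr ws) (inl j).
Proof. by elim: ws x => [|w ws IH] x //=; rewrite IH. Qed.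

Lemma ch_nn x ws a b : (inr a, inr b) \in ch x ws ->
  exists s1 s2, (if x is inr x0 then x0 :: ws else ws) = s1 ++ a :: b :: s2.
Proof.
elim: ws x => [|w ws IH] x /=.
  by rewrite inE => /eqP [].
rewrite inE => /orP [/eqP [<- <-]|/IH [s1 [s2 E]]].
  by exists [::], ws.
case: x => [v|x0].
  by exists s1, s2.
by exists (x0 :: s1), s2; rewrite E.
Qed.

Definition gad (b : bool) (ws : seq W) : seq ((V + W) * (V + W)) :=
  if b then path_edges i j ws else map (@swap_edge _) (path_edges i j ws).

Lemma count_inr (a : W) (ws : seq W) :
  count (pred1 (inr a : V + W)) (map inr ws) = count (pred1 a) ws.
Proof. by elim: ws => [|w ws IH] //=; rewrite IH. Qed.

Lemma map_swap_fst (T : finType) (s : seq (T * T)) :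
  map fst (map (@swap_edge _) s) = map snd s.
Proof. by elim: s => [|e s IH] //=; rewrite IH. Qed.

Lemma map_swap_snd (T : finType) (s : seq (T * T)) :
  map snd (map (@swap_edge _) s) = map fst s.
Proof. by elim: s => [|e s IH] //=; rewrite IH. Qed.

Lemma cnt_gad b ws a :
  count (pred1 (inr a)) (map fst (gad b ws)) = count (pred1 a) ws /\
  count (pred1 (inr a)) (map snd (gad b ws)) = count (pred1 a) ws.
Proof.
rewrite /gad pe_ch; case: b; last rewrite map_swap_fst map_swap_snd.
  by rewrite ch_fst ch_snd /= -cats1 count_cat count_inr /= !addn0.
by rewrite ch_fst ch_snd /= -cats1 count_cat count_inr /= !addn0.
Qed.

Lemma ch_mem ws g : g \in ch (inl i) ws ->
  (forall v, g.1 = inl v -> v = i) /\ (forall v, g.2 = inl v -> v = j).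
Proof.
move=> Hg; split=> v E.
  have := map_f fst Hg; rewrite ch_fst E inE => /orP [/eqP [] //|/mapP [w _]] //.
have := map_f snd Hg; rewrite ch_snd E mem_rcons inE => /orP [/eqP [] //|/mapP [w _]] //.
Qed.

Lemma gad_ends b ws g : g \in gad b ws ->
  (forall v, g.1 = inl v -> v = (if b then i else j)) /\
  (forall v, g.2 = inl v -> v = (if b then j else i)).
Proof.
rewrite /gad pe_ch; case: b; first exact: ch_mem.
by case/mapP => g0 /ch_mem [H1 H2] ->.
Qed.

Lemma gad_nn b ws a c : (inr a, inr c) \in gad b ws ->
  exists s1 s2, ws = s1 ++ (if b then a else c) :: (if b then c else a) :: s2.
Proof.
rewrite /gad pe_ch; case: b; first exact: ch_nn.
case/mapP => [[x y]] H /= [Ex Ey].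
by apply: (@ch_nn (inl i)); rewrite Ex Ey.
Qed.

Lemma gad_in b ws a : a \in ws -> exists2 g, g \in gad b ws & g.2 = inr a.
Proof.
move=> Ha; rewrite /gad pe_ch; case: b.
  have : (inr a : V + W) \in map snd (ch (inl i) ws).
    by rewrite ch_snd mem_rcons inE map_f ?orbT.
  by case/mapP => g Hg ->; exists g.
have : (inr a : V + W) \in map fst (ch (inl i) ws).
  by rewrite ch_fst inE map_f ?orbT.
case/mapP => g Hg ->; exists (swap_edge g) => //.
exact: map_f.
Qed.

Lemma flips_rev (T : finType) (s q : seq (T * T)) :
  flips s q -> flips q s /\ flips q (map (@swap_edge _) s).
Proof.
elim: s q => [|e s IH] [|f q] //= /andP [H /IH [-> ->]].
case: e f H => [x y] [x' y'] /orP [/eqP [-> ->]|/eqP [-> ->]] /=.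
  by rewrite !eqxx !orbT.
by rewrite !eqxx !orbT.
Qed.

Lemma flips_gad b ws q : flips (path_edges i j ws) q -> flips q (gad b ws).
Proof. by case/flips_rev => H1 H2; case: b. Qed.

End Part2.

Lemma count_idx (T : eqType) (s : seq T) x d d' k k' : count (pred1 x) s <= 1 ->
  k < size s -> k' < size s -> nth d s k = x -> nth d' s k' = x -> k = k'.
Proof.
elim: s k k' => [|y s IH] [|k] [|k'] //= Hc Hk Hk' E E'.
- move: Hc; rewrite E eqxx add1n ltnS leqn0 => /eqP /count_memPn.
  by rewrite -E' mem_nth.
- move: Hc; rewrite E' eqxx add1n ltnS leqn0 => /eqP /count_memPn.
  by rewrite -E mem_nth.
- congr S; apply: (IH _ _ _ Hk Hk' E E').
  by apply: leq_trans Hc; apply: leq_addl.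
Qed.

Lemma idx_consec (T : eqType) (s1 s2 : seq T) a c : uniq (s1 ++ a :: c :: s2) ->
  index c (s1 ++ a :: c :: s2) = (index a (s1 ++ a :: c :: s2)).+1.
Proof.
rewrite cat_uniq => /and3P [_ Hd /= /andP [Ha _]].
have Ha1 : a \notin s1 by apply/negP => H; move/hasP: Hd; apply; exists a; rewrite ?inE ?eqxx.
have Hc1 : c \notin s1.
  by apply/negP => H; move/hasP: Hd; apply; exists c; rewrite ?inE ?eqxx ?orbT.
have Hac : a != c by apply/eqP => E; move: Ha; rewrite E inE eqxx.
rewrite !index_cat (negbTE Ha1) (negbTE Hc1) /= eqxx (negbTE Hac) eqxx.
by rewrite addn1 addn0.
Qed.

Lemma memG (T : eqType) (U : eqType) (f : U -> seq T) (P : seq U) g :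
  g \in flatten (map f P) -> exists2 p, p \in P & g \in f p.
Proof.
elim: P => [|p P IH] //=; rewrite mem_cat => /orP [H|/IH [q Hq H]].
  by exists p; rewrite ?inE ?eqxx.
by exists q; rewrite ?inE ?Hq ?orbT.
Qed.

Lemma memG' (T : eqType) (U : eqType) (f : U -> seq T) (P : seq U) g p :
  p \in P -> g \in f p -> g \in flatten (map f P).
Proof.
elim: P => [|q P IH] //=; rewrite inE mem_cat => /orP [/eqP <- ->//|Hp Hg].
by rewrite IH ?orbT.
Qed.

Lemma block (T : eqType) (U : eqType) (f : U -> seq T) (P : seq U) p :
  p \in P -> exists F1 F2, flatten (map f P) = F1 ++ f p ++ F2.
Proof.
case/splitPr => P1 P2; exists (flatten (map f P1)), (flatten (map f P2)).
by rewrite map_cat flatten_cat.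
Qed.

Lemma flips_lift (V W : finType) (E EX : seq (V * V)) :
  flips E EX -> flips (lift_edges W E) (liftE inl EX).
Proof.
elim: E EX => [|e E IH] [|f X] //= /andP [H /IH ->]; rewrite andbT.
case: e f H => [x y] [x' y'] /orP [/eqP [-> ->]|/eqP [-> ->]] /=.
  by rewrite eqxx.
by rewrite eqxx orbT.
Qed.

Lemma part2 (V : finType) (E : seq (V * V)) (i j : V) :
  (i, j) \in E ->
  (forall (W : finType) (P : seq (seq W * seq ((V + W) * (V + W)))) (w : nat),
     (forall p, p \in P -> p.1 != [::]) ->
     uniq (flatten [seq p.1 | p <- P]) ->
     (forall x : W, x \in flatten [seq p.1 | p <- P]) ->
     (forall p, p \in P -> flips (path_edges i j p.1) p.2) ->
     ew_le E w ->
     ew_le (lift_edges W E ++ flatten [seq p.2 | p <- P])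
           (w + max_degree E)).
Proof.
move=> Hij W P w _ Hu Hall Hfl [EX [s [[Hf Hac Hro] Hw]]].
have [k0 [i0 [j0 [k0m Ek0 Hor]]]] := setup Hij Hf.
set b := (i0, j0) == (i, j).
have [Hi0 Hj0] : i0 = (if b then i else j) /\ j0 = (if b then j else i).
  rewrite /b; case: eqP => [[-> ->] //|Hn].
  by case: Hor => [//|[-> ->]].
set F := flatten [seq p.1 | p <- P].
set G := flatten [seq gad i j b p.1 | p <- P].
pose psi := fun x : V + W => if x is inl v then Some v else None.
pose r := fun x : V + W =>
  if x is inr a then (if b then index a F else size F - index a F) else 0.
have psiK : forall v, psi (inl v) = Some v by [].
have psiS : forall x v, psi x = Some v -> inl v = x by case=> [u|a] v //= [->].
have Hg : forall g, g \in G ->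
    (g.1 = inl i0 \/ psi g.1 = None) /\ (g.2 = inl j0 \/ psi g.2 = None).
  move=> g /memG [p Hp /gad_ends [H1 H2]].
  split; [case E1: g.1 => [v|a] | case E2: g.2 => [v|a]]; try by right.
    by left; rewrite (H1 _ E1) Hi0.
  by left; rewrite (H2 _ E2) Hj0.
have Hr : forall g, g \in G -> psi g.1 = None -> psi g.2 = None -> r g.1 < r g.2.
  case=> [[v|a] [v'|c]] // /memG [p Hp /gad_nn [s1 [s2 Es]]] _ _ /=.
  have [F1 [F2 EF]] := block (fun p : seq W * _ => p.1) Hp.
  rewrite -/F Es -catA /= catA in EF.
  have Hu' := Hu; rewrite -/F EF in Hu'.
  have Hidx := idx_consec Hu'.
  have Hm : index (if b then c else a) F < size F.
    by rewrite index_mem EF mem_cat !inE eqxx !orbT.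
  rewrite -EF in Hidx; move: Hm Hidx.
  case: (b) => /= Hm Hi; rewrite Hi ?ltnSn //.
  by rewrite Hi in Hm; rewrite subnS ltn_predL subn_gt0 ltnW.
have HcntF : forall a, count (pred1 a) F <= 1.
  by move=> a; rewrite count_uniq_mem //; case: (_ \in _).
have Hcnt : forall a, count (pred1 (inr a)) (map fst (EX' inl EX G)) <= 1 /\
                      count (pred1 (inr a)) (map snd (EX' inl EX G)) <= 1.
  move=> a; rewrite /EX' !map_cat !count_cat.
  have -> : count (pred1 (inr a)) (map fst (liftE inl EX)) = 0.
    by rewrite /liftE; elim: (EX) => //= e X ->.
  have -> : count (pred1 (inr a)) (map snd (liftE inl EX)) = 0.
    by rewrite /liftE; elim: (EX) => //= e X ->.
  have [-> ->] : count (pred1 (inr a)) (map fst G) = count (pred1 a) F /\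
                 count (pred1 (inr a)) (map snd G) = count (pred1 a) F.
    rewrite /G /F; elim: (P) => [|p Q [IH1 IH2]] //=.
    by rewrite !map_cat !count_cat IH1 IH2 (cnt_gad i j b p.1 a).1 (cnt_gad i j b p.1 a).2.
  by rewrite !add0n; split; apply: HcntF.
have Hin : forall k k' d d', k < size (EX' inl EX G) -> k' < size (EX' inl EX G) ->
    psi (nth d (EX' inl EX G) k).2 = None ->
    (nth d (EX' inl EX G) k).2 = (nth d' (EX' inl EX G) k').2 -> k = k'.
  move=> k k' d d' Hk Hk'; case Ex: (nth d _ k).2 => [v|a] // _ Eq.
  apply: (@count_idx _ (map snd (EX' inl EX G)) (inr a) d.2 d'.2).
  - exact: (Hcnt a).2.
  - by rewrite size_map.
  - by rewrite size_map.
  - by rewrite (nth_map d).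
  - by rewrite (nth_map d') // -Eq.
have Hout : forall k k' d d', k < size (EX' inl EX G) -> k' < size (EX' inl EX G) ->
    psi (nth d (EX' inl EX G) k).1 = None ->
    (nth d (EX' inl EX G) k).1 = (nth d' (EX' inl EX G) k').1 -> k = k'.
  move=> k k' d d' Hk Hk'; case Ex: (nth d _ k).1 => [v|a] // _ Eq.
  apply: (@count_idx _ (map fst (EX' inl EX G)) (inr a) d.1 d'.1).
  - exact: (Hcnt a).1.
  - by rewrite size_map.
  - by rewrite size_map.
  - by rewrite (nth_map d).
  - by rewrite (nth_map d') // -Eq.
have Hex : forall x, psi x = None -> exists2 g, g \in G & g.2 = x.
  case=> [v|a] // _.
  have /memG [p Hp Ha] := Hall a.
  have [g Hg1 Hg2] := gad_in i j b Ha.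
  by exists g => //; apply: (memG' (f := fun p : seq W * _ => gad i j b p.1)) Hp _.
have [A R Wd] := @gadget_main V (V + W)%type inl psi psiK psiS EX G k0 i0 j0 r
  k0m Ek0 Hac Hg Hr Hin Hout Hex s Hro.
exists (EX' inl EX G), (inl s); split; first split => //.
  rewrite /EX'; apply: flips_cat; first exact: flips_lift.
  rewrite /G; elim: (P) Hfl => [|p Q IH] //= Hfl'.
  apply: flips_cat; first by apply: flips_gad; apply: Hfl'; rewrite inE eqxx.
  by apply: IH => q Hq; apply: Hfl'; rewrite inE Hq orbT.
apply: leq_trans Wd _; rewrite -addn1 leq_add //.
exact: max_degree_pos Hij.
Qed.

Theorem lemma34 (V : finType) (E : seq (V * V)) (i j : V) :
  (i, j) \in E ->
  (forall (orient : seq bool) (w : nat),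
     ew_le E w ->
     ew_le (E ++ [seq if b then (i, j) else (j, i) | b <- orient])
           (w + max_degree E)) /\
  (forall (W : finType) (P : seq (seq W * seq ((V + W) * (V + W)))) (w : nat),
     (forall p, p \in P -> p.1 != [::]) ->
     uniq (flatten [seq p.1 | p <- P]) ->
     (forall x : W, x \in flatten [seq p.1 | p <- P]) ->
     (forall p, p \in P -> flips (path_edges i j p.1) p.2) ->
     ew_le E w ->
     ew_le (lift_edges W E ++ flatten [seq p.2 | p <- P])
           (w + max_degree E)).
Proof. by move=> H; split; [exact: part1 | exact: part2]. Qed.
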